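(* Fix $\varepsilon\in(0,1]$. For every $\lambda\in(\varepsilon,\infty)$ with $(\lambda-\varepsilon)N>\lambda\varepsilon$, every $u\in(0,1)$ and every $m\in\mathbb N$, \[ \left|\frac{\lambda N^2}{2u(1-u)(N+\lambda)}\sum_{n=mN+1}^\infty\Big(\frac N{N+\lambda}\Big)^n\Big(\frac1NS_{\beta_u}\big(L_0^{n+1}(J)\big)-\frac1NS_{\beta_u}\big(L_0^n(J)\big)\Big)\right| \le\left[\Big(1+\frac\lambda N\Big)\Big(1-\frac\varepsilon N\Big)\right]^{-(mN+1)}\frac{C_\varepsilon\,\lambda(N-\varepsilon)}{(\lambda-\varepsilon)N-\lambda\varepsilon}, \] where $C_\varepsilon=\frac1\pi\left(2\varepsilon^{-1}+9+\pi+\frac{32\sqrt2}{(1-\cos1)^{1/2}}\right)\frac{4+\varepsilon}{\varepsilon}$.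
   Context: $E$ is a finite set with $N=\#E>8$ elements, listed in a fixed order; $\mathsf M_E$ is the space of complex $N\times N$ matrices indexed by $E\times E$. $Q$ is an irreducible stochastic matrix on $E$ with $Q(x,y)=Q(y,x)$ for all $x,y$ and $\mathrm{tr}(Q)=0$. $I$ is the identity and $J$ the matrix with all entries $1/N$. $L_0(C)=\frac{N-2}NC+\frac1N(CQ+QC)-\frac{2\,\mathrm{tr}(C)}{N^2}Q+\frac{2\,\mathrm{tr}(C)}{N^2}I$, and $L_0^n$ is its $n$-fold composition. For $u\in(0,1)$, $\beta_u$ is a random vector in $\{0,1\}^E$ with i.i.d. Bernoulli($u$) entries and $S_{\beta_u}(C)=\mathbb E\big[\sum_{x,y}\beta_u(x)C(x,y)\beta_u(y)\big]$. *)

(* Defs.v *)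
From HB Require Import structures.
From Stdlib Require Import Reals.
From mathcomp Require Import all_boot.

Set Implicit Arguments.
Unset Strict Implicit.
Unset Printing Implicit Defensive.

HB.instance Definition _ :=
  Monoid.isComLaw.Build R R0 Rplus (fun a b c => esym (Rplus_assoc a b c)) Rplus_comm Rplus_0_l.

Open Scope R_scope.

Section Defs.
Variable E : finType.

Definition mat := E -> E -> R.

Definition esum (f : E -> R) : R := \big[Rplus/0]_(x : E) f x.

Definition NR : R := INR #|E|.

Definition mmul (A B : mat) : mat := fun x y => esum (fun z => A x z * B z y).
Definition mtr (C : mat) : R := esum (fun x => C x x).
Definition Imx : mat := fun x y => if x == y then 1 else 0.
Definition Jmx : mat := fun _ _ => / NR.
Definition mpow (A : mat) (n : nat) : mat := Nat.iter n (mmul A) Imx.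

Definition symmetric_mx (Q : mat) : Prop := forall x y, Q x y = Q y x.
Definition stochastic_mx (Q : mat) : Prop :=
  (forall x y, 0 <= Q x y) /\ (forall x, esum (Q x) = 1).
Definition irreducible_mx (Q : mat) : Prop :=
  forall x y, exists n : nat, 0 < mpow Q n x y.

Definition L0 (Q : mat) (C : mat) : mat := fun x y =>
  (NR - 2) / NR * C x y + / NR * (mmul C Q x y + mmul Q C x y)
  - 2 * mtr C / NR ^ 2 * Q x y + 2 * mtr C / NR ^ 2 * Imx x y.

Definition L0n (Q : mat) (n : nat) (C : mat) : mat := Nat.iter n (L0 Q) C.

Definition bern_prob (u : R) (b : {ffun E -> bool}) : R :=
  \big[Rmult/1]_(x : E) (if b x then u else 1 - u).

Definition bit (b : {ffun E -> bool}) (x : E) : R := if b x then 1 else 0.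

Definition S_beta (u : R) (C : mat) : R :=
  \big[Rplus/0]_(b : {ffun E -> bool})
     (bern_prob u b * esum (fun x => esum (fun y => bit b x * C x y * bit b y))).

End Defs.

Definition C_eps (eps : R) : R :=
  / PI * (2 / eps + 9 + PI + 32 * sqrt 2 / sqrt (1 - cos 1)) * ((4 + eps) / eps).

(* Main.v *)
Require Import Defs.
From HB Require Import structures.
From Stdlib Require Import Reals Lra FunctionalExtensionality.
From mathcomp Require Import all_boot.
Open Scope R_scope.

HB.instance Definition _ :=
  Monoid.isComLaw.Build R R1 Rmult (fun a b c => esym (Rmult_assoc a b c)) Rmult_comm Rmult_1_l.
HB.instance Definition _ := Monoid.isMulLaw.Build R R0 Rmult Rmult_0_l Rmult_0_r.
HB.instance Definition _ := Monoid.isAddLaw.Build R Rmult Rplus Rmult_plus_distr_r Rmult_plus_distr_l.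

Lemma esumD {E : finType} (f g : E -> R) :
  esum (fun x => f x + g x) = esum f + esum g.
Proof. by rewrite /esum big_split. Qed.

Lemma esumZ {E : finType} (c : R) (f : E -> R) :
  esum (fun x => c * f x) = c * esum f.
Proof. by rewrite /esum (big_distrr (times:=Rmult) (plus:=Rplus)). Qed.

Lemma esumZr {E : finType} (c : R) (f : E -> R) :
  esum (fun x => f x * c) = esum f * c.
Proof. rewrite Rmult_comm -esumZ; unfold esum; apply: eq_bigr => x _; ring. Qed.

Lemma esum_ext {E : finType} (f g : E -> R) :
  (forall x, f x = g x) -> esum f = esum g.
Proof. move=> h; rewrite /esum; apply: eq_bigr => x _; exact: h. Qed.

Lemma esum0 {E : finType} : esum (fun _ : E => 0) = 0.
Proof. by rewrite /esum big1. Qed.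

Lemma esumN {E : finType} (f : E -> R) : esum (fun x => - f x) = - esum f.
Proof.
have := esumZ (-1) f. rewrite (esum_ext (fun x => -1 * f x) (fun x => - f x)).
  move=> ->; ring. move=> x; ring.
Qed.

Lemma esumB {E : finType} (f g : E -> R) :
  esum (fun x => f x - g x) = esum f - esum g.
Proof. unfold Rminus; rewrite esumD esumN //. Qed.

Lemma esum_swap {E : finType} (F : E -> E -> R) :
  esum (fun x => esum (fun y => F x y)) = esum (fun y => esum (fun x => F x y)).
Proof. by rewrite /esum exchange_big. Qed.

Lemma esum_le {E : finType} (f g : E -> R) :
  (forall x, f x <= g x) -> esum f <= esum g.
Proof.
move=> h; rewrite /esum; apply: (big_ind2 (fun a b => a <= b)) => //.
  lra. move=> *; lra.
Qed.

Lemma esum_ge0 {E : finType} (f : E -> R) :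
  (forall x, 0 <= f x) -> 0 <= esum f.
Proof. move=> h; rewrite -(@esum0 E); exact: esum_le. Qed.

Lemma esum_delta {E : finType} (x : E) (f : E -> R) :
  esum (fun y => Imx y x * f y) = f x.
Proof.
rewrite /esum (bigD1 x) //= big1.
  rewrite /Imx eqxx; ring.
move=> y /= hy; rewrite /Imx (negbTE hy); ring.
Qed.

Lemma esum_delta' {E : finType} (x : E) (f : E -> R) :
  esum (fun y => Imx x y * f y) = f x.
Proof.
rewrite -(esum_delta x f); apply: esum_ext => y; rewrite /Imx eq_sym //.
Qed.

Lemma esum_const {E : finType} (c : R) : esum (fun _ : E => c) = NR E * c.
Proof.
rewrite /esum /NR big_const; elim: #|E| => [|n IH] /=; first ring.
rewrite IH; destruct n; simpl; ring.
Qed.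

Lemma div_ge0 a b : 0 <= a -> 0 < b -> 0 <= a / b.
Proof. move=> ha hb; unfold Rdiv; apply: Rmult_le_pos => //; left; exact: Rinv_0_lt_compat. Qed.
Definition madd {E : finType} (A B : mat E) : mat E := fun x y => A x y + B x y.
Definition msc {E : finType} (c : R) (A : mat E) : mat E := fun x y => c * A x y.

Lemma mmul_assoc {E : finType} (A B C : mat E) :
  mmul (mmul A B) C = mmul A (mmul B C).
Proof.
apply: functional_extensionality => x; apply: functional_extensionality => y.
rewrite /mmul.
rewrite (esum_ext _ (fun z => esum (fun w => A x w * B w z * C z y))); last first.
  by move=> z; rewrite -esumZr.
rewrite esum_swap; apply: esum_ext => w; rewrite -esumZ; apply: esum_ext => z; ring.
Qed.

Lemma mmul_addl {E : finType} (A B C : mat E) :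
  mmul (madd A B) C = madd (mmul A C) (mmul B C).
Proof.
apply: functional_extensionality => x; apply: functional_extensionality => y.
rewrite /mmul /madd -esumD; apply: esum_ext => z; ring.
Qed.

Lemma mmul_addr {E : finType} (A B C : mat E) :
  mmul C (madd A B) = madd (mmul C A) (mmul C B).
Proof.
apply: functional_extensionality => x; apply: functional_extensionality => y.
rewrite /mmul /madd -esumD; apply: esum_ext => z; ring.
Qed.

Lemma mmul_scl {E : finType} c (A B : mat E) :
  mmul (msc c A) B = msc c (mmul A B).
Proof.
apply: functional_extensionality => x; apply: functional_extensionality => y.
rewrite /mmul /msc -esumZ; apply: esum_ext => z; ring.
Qed.

Lemma mmul_scr {E : finType} c (A B : mat E) :
  mmul A (msc c B) = msc c (mmul A B).
Proof.
apply: functional_extensionality => x; apply: functional_extensionality => y.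
rewrite /mmul /msc -esumZ; apply: esum_ext => z; ring.
Qed.

Lemma mmul1l {E : finType} (A : mat E) : mmul (@Imx E) A = A.
Proof.
apply: functional_extensionality => x; apply: functional_extensionality => y.
by rewrite /mmul esum_delta'.
Qed.

Lemma mmul1r {E : finType} (A : mat E) : mmul A (@Imx E) = A.
Proof.
apply: functional_extensionality => x; apply: functional_extensionality => y.
rewrite /mmul -(esum_delta y (A x)); apply: esum_ext => z; ring.
Qed.

Lemma mtr_add {E : finType} (A B : mat E) : mtr (madd A B) = mtr A + mtr B.
Proof. by rewrite /mtr /madd esumD. Qed.

Lemma mtr_sc {E : finType} c (A : mat E) : mtr (msc c A) = c * mtr A.
Proof. by rewrite /mtr /msc esumZ. Qed.

Lemma mtr_comm {E : finType} (A B : mat E) : mtr (mmul A B) = mtr (mmul B A).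
Proof.
rewrite /mtr /mmul esum_swap; apply: esum_ext => x; apply: esum_ext => y; ring.
Qed.

Lemma mtrI {E : finType} : mtr (@Imx E) = NR E.
Proof. rewrite /mtr (esum_ext _ (fun _ => 1)) ?esum_const; first ring.
by move=> x; rewrite /Imx eqxx. Qed.

Lemma mpow_add {E : finType} (A : mat E) m n :
  mpow A (m + n) = mmul (mpow A m) (mpow A n).
Proof.
elim: m => [|m IH]; first by rewrite add0n /= mmul1l.
by rewrite addSn /= IH mmul_assoc.
Qed.

Lemma mpow1 {E : finType} (A : mat E) : mpow A 1 = A.
Proof. by rewrite /= mmul1r. Qed.

Lemma mpowS_r {E : finType} (A : mat E) n : mpow A n.+1 = mmul (mpow A n) A.
Proof. by rewrite -addn1 mpow_add mpow1. Qed.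

Definition Pm {E : finType} (Q : mat E) : mat E :=
  fun x y => (NR E - 2) / NR E * Imx x y + 2 / NR E * Q x y.
Definition Lm {E : finType} (Q : mat E) : mat E := fun x y => Imx x y - Q x y.
Definition qf {E : finType} (A : mat E) (v : E -> R) : R :=
  esum (fun y => esum (fun z => v y * A y z * v z)).

Lemma NR_gt8 {E : finType} : (8 < #|E|)%N -> 8 < NR E.
Proof.
move=> /ltP h; rewrite /NR; have := lt_INR _ _ h.
have -> : INR 8 = 8 by simpl; ring. done.
Qed.

Lemma colsum {E : finType} (Q : mat E) : stochastic_mx Q -> symmetric_mx Q ->
  forall y, esum (fun x => Q x y) = 1.
Proof.
move=> [_ hs] hsym y; rewrite -(hs y); apply: esum_ext => x; exact: hsym.
Qed.

Lemma qfQ_le {E : finType} (Q : mat E) : stochastic_mx Q -> symmetric_mx Q ->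
  forall v, qf Q v <= esum (fun y => v y * v y).
Proof.
move=> hst hsym v; have [hpos hs] := hst.
apply: (Rle_trans _ (esum (fun y => esum (fun z => Q y z * (v y * v y + v z * v z) / 2)))).
  apply: esum_le => y; apply: esum_le => z.
  have := hpos y z; have := pow2_ge_0 (v y - v z); nra.
rewrite (esum_ext _ (fun y => v y * v y / 2 * esum (fun z => Q y z)
            + esum (fun z => v z * v z / 2 * Q y z))); last first.
  move=> y; rewrite -esumZ -esumD; apply: esum_ext => z; field.
rewrite esumD esum_swap.
rewrite (esum_ext (fun y => v y * v y / 2 * esum (fun z => Q y z)) (fun y => v y * v y / 2)); last first.
  by move=> y; rewrite hs; ring.
rewrite (esum_ext (fun y => esum (fun x => v y * v y / 2 * Q x y)) (fun y => v y * v y / 2)); last first.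
  by move=> y; rewrite esumZ colsum //; ring.
rewrite -esumD; apply: esum_le => y; lra.
Qed.

Lemma jensen {E : finType} (Q : mat E) : stochastic_mx Q -> symmetric_mx Q ->
  forall v, esum (fun w => (esum (fun z => Q w z * v z))^2) <= esum (fun z => v z * v z).
Proof.
move=> hst hsym v; have [hpos hs] := hst.
apply: (Rle_trans _ (esum (fun w => esum (fun z => Q w z * (v z * v z))))).
  apply: esum_le => w; set m := esum (fun z => Q w z * v z).
  have h0 : 0 <= esum (fun z => Q w z * ((v z - m) * (v z - m))).
    apply: esum_ge0 => z; have := hpos w z; have := pow2_ge_0 (v z - m); nra.
  have : esum (fun z => Q w z * ((v z - m) * (v z - m))) =
     esum (fun z => Q w z * (v z * v z)) - esum (fun z => (2 * m) * (Q w z * v z))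
       + esum (fun z => (m * m) * Q w z).
    rewrite -esumB -esumD; apply: esum_ext => z; ring.
  rewrite !esumZ.
  rewrite hs -/m; nra.
rewrite esum_swap; right; apply: esum_ext => z.
rewrite esumZr colsum //; ring.
Qed.

Lemma qf_QQ {E : finType} (Q : mat E) : symmetric_mx Q ->
  forall v, qf (mmul Q Q) v = esum (fun w => (esum (fun z => Q w z * v z))^2).
Proof.
move=> hsym v; rewrite /qf /mmul.
rewrite (esum_ext _ (fun y => esum (fun w => esum (fun z => v y * Q y w * (Q w z * v z))))); last first.
  move=> y; rewrite esum_swap; apply: esum_ext => z; rewrite -esumZ -esumZr.
  apply: esum_ext => w; ring.
rewrite esum_swap; apply: esum_ext => w.
rewrite (esum_ext _ (fun y => Q w y * v y * esum (fun z => Q w z * v z))); last first.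
  by move=> y; rewrite esumZ hsym; ring.
by rewrite esumZr /=; ring.
Qed.

Lemma qf_lin {E : finType} (A B : mat E) al be ga v :
  qf (fun y z => al * Imx y z + be * A y z - ga * B y z) v
  = al * esum (fun y => v y * v y) + be * qf A v - ga * qf B v.
Proof.
rewrite /qf -!esumZ -esumD -esumB; apply: esum_ext => y.
rewrite -(esum_delta' y (fun z => al * (v y * v z))).
rewrite -!esumZ -esumD -esumB; apply: esum_ext => z; ring.
Qed.

Lemma qf_Lm {E : finType} (Q : mat E) : stochastic_mx Q -> symmetric_mx Q ->
  forall v, qf (Lm Q) v = esum (fun y => v y * v y) - qf Q v.
Proof.
move=> _ _ v; have := qf_lin Q (fun _ _ => 0) 1 (-1) 0 v.
rewrite (_ : (fun y z => 1 * Imx y z + -1 * Q y z - 0 * 0) = Lm Q).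
  move=> ->; ring.
apply: functional_extensionality => y; apply: functional_extensionality => z.
rewrite /Lm; ring.
Qed.

Lemma LP_eq {E : finType} (Q : mat E) :
  mmul (Lm Q) (Pm Q) = fun y z => (NR E - 2) / NR E * Imx y z
      + (2 / NR E - (NR E - 2) / NR E) * Q y z - 2 / NR E * mmul Q Q y z.
Proof.
apply: functional_extensionality => y; apply: functional_extensionality => z.
rewrite /mmul /Lm /Pm.
rewrite (esum_ext _ (fun w => (NR E - 2) / NR E * (Imx y w * Imx w z)
   + 2 / NR E * (Imx y w * Q w z) - (NR E - 2) / NR E * (Q y w * Imx w z) - 2 / NR E * (Q y w * Q w z))); last first.
  move=> w; ring.
rewrite !esumB esumD !esumZ esum_delta' esum_delta'.
rewrite (esum_ext (fun w => Q y w * Imx w z) (fun w => Imx w z * Q y w)); last by move=> w; ring.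
rewrite esum_delta /Imx; case: eqP => _; ring.
Qed.

Lemma qf_Lm_ge0 {E : finType} (Q : mat E) : stochastic_mx Q -> symmetric_mx Q ->
  forall v, 0 <= qf (Lm Q) v.
Proof.
move=> hst hsym v; rewrite qf_Lm //; have := qfQ_le Q hst hsym v; lra.
Qed.

Lemma qf_LP_ge0 {E : finType} (Q : mat E) : stochastic_mx Q -> symmetric_mx Q ->
  4 <= NR E -> forall v, 0 <= qf (mmul (Lm Q) (Pm Q)) v.
Proof.
move=> hst hsym hN v; rewrite LP_eq qf_lin qf_QQ //.
have h1 := qfQ_le Q hst hsym v; have h2 := jensen Q hst hsym v.
set S := esum (fun y => v y * v y) in h1 h2 *.
set T := esum _ in h2 *. set q := qf Q v in h1 *.
have ha : (NR E - 2) / NR E - 2 / NR E >= 0.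
  have -> : (NR E - 2) / NR E - 2 / NR E = (NR E - 4) / NR E by field; lra.
  apply: Rle_ge; apply: div_ge0; lra.
have hb : 0 <= 2 / NR E by apply: div_ge0; lra.
have : 0 <= ((NR E - 2) / NR E - 2 / NR E) * (S - q) by apply: Rmult_le_pos; lra.
have : 0 <= 2 / NR E * (S - T) by apply: Rmult_le_pos; lra.
nra.
Qed.

Lemma Pm_sym {E : finType} (Q : mat E) : symmetric_mx Q -> symmetric_mx (Pm Q).
Proof. by move=> hsym x y; rewrite /Pm hsym /Imx eq_sym. Qed.

Lemma mpow_sym {E : finType} (A : mat E) : symmetric_mx A ->
  forall k, symmetric_mx (mpow A k).
Proof.
move=> hA; elim=> [|k IH] x y; first by rewrite /= /Imx eq_sym.
rewrite {2}mpowS_r /= /mmul; apply: esum_ext => z; rewrite hA IH; ring.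
Qed.

Lemma tr_sq {E : finType} (A M : mat E) : symmetric_mx M ->
  mtr (mmul A (mmul M M)) = esum (fun x => qf A (M x)).
Proof.
move=> hM; rewrite /mtr /mmul /qf.
rewrite (esum_ext _ (fun y => esum (fun x => esum (fun z => M x y * A y z * M x z)))).
  by rewrite esum_swap.
move=> y.
rewrite (esum_ext _ (fun z => esum (fun x => A y z * (M z x * M x y)))).
  rewrite esum_swap; apply: esum_ext => x; apply: esum_ext => z.
  rewrite (hM z x); ring.
by move=> z; rewrite esumZ.
Qed.

Lemma tr_LP_ge0 {E : finType} (Q : mat E) : stochastic_mx Q -> symmetric_mx Q ->
  4 <= NR E -> forall j, 0 <= mtr (mmul (Lm Q) (mpow (Pm Q) j)).
Proof.
move=> hst hsym hN j.
have hM := @mpow_sym E (Pm Q) (Pm_sym Q hsym) j./2.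
rewrite -(odd_double_half j) -addnn; case: (odd j) => /=.
  rewrite add0n mpow_add -mmul_assoc tr_sq //.
  apply: esum_ge0 => x; exact: qf_LP_ge0.
rewrite add0n mpow_add tr_sq //; apply: esum_ge0 => x; exact: qf_Lm_ge0.
Qed.

Definition msum {E : finType} (A : mat E) : R := esum (fun x => esum (A x)).

Lemma L0_expand {E : finType} (Q C : mat E) :
  L0 Q C = madd (madd (madd (msc ((NR E - 2) / NR E) C)
              (msc (/ NR E) (madd (mmul C Q) (mmul Q C))))
              (msc (- (2 * mtr C / NR E ^ 2)) Q)) (msc (2 * mtr C / NR E ^ 2) (@Imx E)).
Proof.
apply: functional_extensionality => x; apply: functional_extensionality => y.
rewrite /L0 /madd /msc; ring.
Qed.

Lemma L0_comm {E : finType} (Q C : mat E) :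
  mmul C Q = mmul Q C -> mmul (L0 Q C) Q = mmul Q (L0 Q C).
Proof.
move=> h; rewrite L0_expand !mmul_addl !mmul_addr !mmul_scl !mmul_scr !mmul_addl !mmul_addr.
rewrite mmul1l mmul1r h !mmul_assoc h //.
Qed.

Lemma JQ {E : finType} (Q : mat E) : stochastic_mx Q -> symmetric_mx Q ->
  mmul (@Jmx E) Q = @Jmx E /\ mmul Q (@Jmx E) = @Jmx E.
Proof.
move=> hst hsym; have [_ hs] := hst; split;
  apply: functional_extensionality => x; apply: functional_extensionality => y;
  rewrite /mmul /Jmx.
  by rewrite esumZ colsum //; ring.
by rewrite esumZr hs; ring.
Qed.

Lemma Cn_comm {E : finType} (Q : mat E) : stochastic_mx Q -> symmetric_mx Q ->
  forall n, mmul (L0n Q n (@Jmx E)) Q = mmul Q (L0n Q n (@Jmx E)).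
Proof.
move=> hst hsym; elim=> [|n IH] /=.
  by have [-> ->] := JQ Q hst hsym.
exact: L0_comm.
Qed.

Lemma mtr_L0 {E : finType} (Q C : mat E) : mtr Q = 0 -> NR E <> 0 ->
  mtr (L0 Q C) = mtr C + 2 / NR E * mtr (mmul C Q).
Proof.
move=> htr hN; rewrite L0_expand !mtr_add !mtr_sc mtr_add (mtr_comm Q C) htr mtrI.
field; auto.
Qed.

Lemma msum_add {E : finType} (A B : mat E) : msum (madd A B) = msum A + msum B.
Proof. rewrite /msum /madd -esumD; apply: esum_ext => x; by rewrite esumD. Qed.

Lemma msum_sc {E : finType} c (A : mat E) : msum (msc c A) = c * msum A.
Proof. rewrite /msum /msc -esumZ; apply: esum_ext => x; by rewrite esumZ. Qed.

Lemma msum_L0 {E : finType} (Q C : mat E) : stochastic_mx Q -> symmetric_mx Q ->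
  NR E <> 0 -> msum (L0 Q C) = msum C.
Proof.
move=> hst hsym hN; have [_ hs] := hst.
have h1 : msum (mmul C Q) = msum C.
  rewrite /msum /mmul; apply: esum_ext => x; rewrite esum_swap.
  apply: esum_ext => z; rewrite esumZ hs; ring.
have h2 : msum (mmul Q C) = msum C.
  rewrite /msum /mmul esum_swap.
  rewrite (esum_ext _ (fun y => esum (fun z => esum (fun x => Q x z * C z y)))); last first.
    by move=> y; rewrite esum_swap.
  rewrite esum_swap; apply: esum_ext => z; apply: esum_ext => y.
  by rewrite esumZr colsum //; ring.
have h3 : msum Q = NR E.
  rewrite /msum (esum_ext _ (fun _ => 1)); first by rewrite esum_const; ring.
  by move=> x; rewrite hs.
have h4 : msum (@Imx E) = NR E.
  rewrite /msum (esum_ext _ (fun _ => 1)); first by rewrite esum_const; ring.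
  move=> x; rewrite (esum_ext _ (fun y => Imx x y * 1)) ?esum_delta' //.
  by move=> y; ring.
rewrite L0_expand !msum_add !msum_sc msum_add h1 h2 h3 h4; field; auto.
Qed.

Definition Cn {E : finType} (Q : mat E) n := L0n Q n (@Jmx E).
Definition Zs {E : finType} (Q : mat E) n : mat E :=
  madd (madd (msc (mtr (Cn Q n) / NR E) (@Imx E)) (msc (-1) (Cn Q n))) (@Jmx E).

Lemma Pm_expand {E : finType} (Q : mat E) :
  Pm Q = madd (msc ((NR E - 2) / NR E) (@Imx E)) (msc (2 / NR E) Q).
Proof. by []. Qed.

Lemma JP {E : finType} (Q : mat E) : stochastic_mx Q -> symmetric_mx Q -> NR E <> 0 ->
  mmul (@Jmx E) (Pm Q) = @Jmx E.
Proof.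
move=> hst hsym hN; have [h1 _] := JQ Q hst hsym.
rewrite Pm_expand mmul_addr !mmul_scr mmul1r h1.
apply: functional_extensionality => x; apply: functional_extensionality => y.
rewrite /madd /msc; field; auto.
Qed.

Lemma Zs_step {E : finType} (Q : mat E) : stochastic_mx Q -> symmetric_mx Q ->
  mtr Q = 0 -> NR E <> 0 -> forall n,
  Zs Q n.+1 = madd (mmul (Zs Q n) (Pm Q))
                   (msc (2 * mtr (mmul (Cn Q n) Q) / NR E ^ 2) (@Imx E)).
Proof.
move=> hst hsym htr hN n.
have hc := Cn_comm Q hst hsym n; rewrite -/(Cn Q n) in hc.
rewrite /Zs.
have -> : Cn Q n.+1 = L0 Q (Cn Q n) by [].
rewrite mtr_L0 //.
rewrite !mmul_addl !mmul_scl mmul1l JP //.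
rewrite (Pm_expand Q) mmul_addr !mmul_scr mmul1r.
set C := Cn Q n; rewrite -/C in hc.
apply: functional_extensionality => x; apply: functional_extensionality => y.
rewrite /madd /msc /L0 -hc /Jmx; field; auto.
Qed.

Definition Good {E : finType} (Q Z : mat E) : Prop :=
  (forall x y, 0 <= Z x y) /\
  forall j, 0 <= mtr (mmul (mmul (Lm Q) Z) (mpow (Pm Q) j)).

Lemma Pm_ge0 {E : finType} (Q : mat E) : stochastic_mx Q -> 4 <= NR E ->
  forall x y, 0 <= Pm Q x y.
Proof.
move=> [hpos _] hN x y; rewrite /Pm.
have h1 : 0 <= (NR E - 2) / NR E by apply: div_ge0; lra.
have h2 : 0 <= 2 / NR E by apply: div_ge0; lra.
have h3 : 0 <= Imx x y by rewrite /Imx; case: eqP => _; lra.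
have := hpos x y; nra.
Qed.

Lemma Good_step {E : finType} (Q Z : mat E) c : stochastic_mx Q -> symmetric_mx Q ->
  4 <= NR E -> Good Q Z -> 0 <= c -> Good Q (madd (mmul Z (Pm Q)) (msc c (@Imx E))).
Proof.
move=> hst hsym hN [hZ hT] hc; split.
  move=> x y; rewrite /madd /msc /mmul.
  have h3 : 0 <= Imx x y by rewrite /Imx; case: eqP => _; lra.
  have : 0 <= esum (fun z => Z x z * Pm Q z y).
    apply: esum_ge0 => z; apply: Rmult_le_pos; [exact: hZ | exact: Pm_ge0].
  nra.
move=> j; rewrite mmul_addr mmul_scr mmul1r mmul_addl mmul_scl mtr_add mtr_sc.
rewrite -mmul_assoc mmul_assoc.
have := hT j.+1; rewrite /=.
have := tr_LP_ge0 Q hst hsym hN j; nra.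
Qed.

Lemma mtrJ {E : finType} : NR E <> 0 -> mtr (@Jmx E) = 1.
Proof. move=> hN; rewrite /mtr /Jmx esum_const; field; auto. Qed.

Lemma Zs0 {E : finType} (Q : mat E) : NR E <> 0 -> Zs Q 0 = msc (/ NR E) (@Imx E).
Proof.
move=> hN; rewrite /Zs /Cn /= mtrJ //.
apply: functional_extensionality => x; apply: functional_extensionality => y.
rewrite /madd /msc /Jmx; field; auto.
Qed.

Lemma Good0 {E : finType} (Q : mat E) : stochastic_mx Q -> symmetric_mx Q ->
  4 <= NR E -> Good Q (Zs Q 0).
Proof.
move=> hst hsym hN; rewrite Zs0; last lra; split.
  move=> x y; rewrite /msc /Imx; apply: Rmult_le_pos.
    left; apply: Rinv_0_lt_compat; lra.
  case: eqP => _; lra.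
move=> j; rewrite mmul_scr mmul1r mmul_scl mtr_sc.
apply: Rmult_le_pos; first by left; apply: Rinv_0_lt_compat; lra.
exact: tr_LP_ge0.
Qed.

Lemma Lm_expand {E : finType} (Q : mat E) : Lm Q = madd (@Imx E) (msc (-1) Q).
Proof.
apply: functional_extensionality => x; apply: functional_extensionality => y.
rewrite /Lm /madd /msc; ring.
Qed.

Lemma trQZ {E : finType} (Q : mat E) : stochastic_mx Q -> symmetric_mx Q ->
  mtr Q = 0 -> NR E <> 0 -> forall n,
  mtr (mmul Q (Zs Q n)) = 1 - mtr (mmul (Cn Q n) Q).
Proof.
move=> hst hsym htr hN n; have [_ hQJ] := JQ Q hst hsym.
rewrite /Zs !mmul_addr !mmul_scr mmul1r hQJ !mtr_add !mtr_sc htr mtrJ // (mtr_comm Q).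
ring.
Qed.

Lemma trLZ {E : finType} (Q : mat E) : stochastic_mx Q -> symmetric_mx Q ->
  mtr Q = 0 -> NR E <> 0 -> forall n,
  mtr (mmul (Lm Q) (Zs Q n)) = mtr (mmul (Cn Q n) Q).
Proof.
move=> hst hsym htr hN n.
rewrite Lm_expand mmul_addl mmul_scl mmul1l mtr_add mtr_sc trQZ //.
rewrite /Zs !mtr_add !mtr_sc mtrI mtrJ //; field; auto.
Qed.

Lemma d_bounds {E : finType} (Q : mat E) : stochastic_mx Q -> symmetric_mx Q ->
  mtr Q = 0 -> 4 <= NR E -> forall n,
  Good Q (Zs Q n) /\ 0 <= mtr (mmul (Cn Q n) Q) <= 1.
Proof.
move=> hst hsym htr hN.
have hN0 : NR E <> 0 by lra.
have bnd : forall n, Good Q (Zs Q n) -> 0 <= mtr (mmul (Cn Q n) Q) <= 1.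
  move=> n [hZ hT]; split.
    have := hT 0%N; rewrite /= mmul1r trLZ //.
  have : 0 <= mtr (mmul Q (Zs Q n)).
    apply: esum_ge0 => x; apply: esum_ge0 => z; apply: Rmult_le_pos => //.
    by have [hp _] := hst.
  rewrite trQZ //; lra.
elim=> [|n [IHg IHd]].
  have h := Good0 Q hst hsym hN; split => //; exact: bnd.
have hg : Good Q (Zs Q n.+1).
  rewrite Zs_step //; apply: Good_step => //.
  apply: div_ge0; first lra.
  apply: pow_lt; lra.
split => //; exact: bnd.
Qed.

Lemma prod_ind {E : finType} (x : E) (t : E -> bool) :
  \big[Rmult/1]_(z : E) (if z == x then (if t z then 1 else 0) else 1) = (if t x then 1 else 0).
Proof.
rewrite (bigD1 x) //= eqxx big1; first ring.
by move=> z /negbTE ->.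
Qed.

Lemma bern_pair {E : finType} (u : R) (x y : E) :
  \big[Rplus/0]_(b : {ffun E -> bool}) (bern_prob u b * (bit b x * bit b y))
  = if x == y then u else u * u.
Proof.
pose w (z : E) (t : bool) := (if t then u else 1 - u) *
  ((if z == x then (if t then 1 else 0) else 1) * (if z == y then (if t then 1 else 0) else 1)).
rewrite (eq_bigr (fun b : {ffun E -> bool} => \big[Rmult/1]_(z : E) w z (b z))); last first.
  move=> b _; rewrite /w big_split /= big_split /= prod_ind prod_ind //.
rewrite -(bigA_distr_bigA (times := Rmult) (plus := Rplus)).
rewrite (eq_bigr (fun z => if (z == x) || (z == y) then u else 1)); last first.
  move=> z _; rewrite big_bool /w /=.
  by case: (z == x); case: (z == y) => /=; ring.
rewrite (bigD1 x) //= eqxx /=.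
case: eqP => [<-|/eqP hxy].
  rewrite big1; first ring.
  by move=> z /negbTE ->.
rewrite (bigD1 y) /=; last by rewrite eq_sym.
rewrite eqxx orbT big1; first ring.
by move=> z /andP [/negbTE -> /negbTE ->].
Qed.

Lemma S_beta_eq {E : finType} (u : R) (C : mat E) :
  S_beta u C = u * u * msum C + (u - u * u) * mtr C.
Proof.
rewrite /S_beta.
rewrite (eq_bigr (fun b : {ffun E -> bool} => esum (fun x => esum (fun y =>
           C x y * (bern_prob u b * (bit b x * bit b y)))))); last first.
  move=> b _; rewrite -esumZ; apply: esum_ext => x; rewrite -esumZ.
  apply: esum_ext => y; ring.
rewrite exchange_big /=.
rewrite (eq_bigr (fun x => esum (fun y => C x y * (u * u) + (u - u * u) * (Imx x y * C x y)))).
  rewrite -/(esum _).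
  rewrite (esum_ext _ (fun x => esum (fun y => C x y) * (u * u) + (u - u * u) * C x x)).
    rewrite esumD esumZ esumZr /msum /mtr.
    have -> : esum (fun x => esum (fun y => C x y)) = esum (fun x => esum (C x)) by [].
    ring.
  move=> x; rewrite esumD esumZ esum_delta' esumZr //.
move=> x _; rewrite exchange_big /=; apply: esum_ext => y.
rewrite -(big_distrr (times := Rmult) (plus := Rplus)) /= bern_pair /Imx.
case: eqP => [->|_]; ring.
Qed.

Lemma C_eps_ge1 (eps : R) : 0 < eps <= 1 -> 1 <= C_eps eps.
Proof.
move=> [h0 h1]; rewrite /C_eps.
have hpi := PI_RGT_0.
have hs : 0 <= 32 * sqrt 2 / sqrt (1 - cos 1).
  have := sqrt_pos 2; have := sqrt_pos (1 - cos 1) => hs2 hs1.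
  case: (Req_dec (sqrt (1 - cos 1)) 0) => [->|hne].
    rewrite /Rdiv Rinv_0; lra.
  apply: div_ge0; lra.
have he : 0 < 2 / eps by apply: Rdiv_lt_0_compat; lra.
have h4 : 5 <= (4 + eps) / eps.
  have -> : (4 + eps) / eps = 4 * / eps + 1 by field; lra.
  have : 1 <= / eps.
    rewrite -Rinv_1; apply: Rinv_le_contravar; lra.
  lra.
set A := 2 / eps + 9 + PI + 32 * sqrt 2 / sqrt (1 - cos 1).
have hA : 1 <= / PI * A.
  have -> : / PI * A = A / PI by rewrite /Rdiv Rmult_comm.
  apply: (Rmult_le_reg_r PI); first lra.
  rewrite /Rdiv Rmult_assoc Rinv_l; [|lra]; rewrite /A; lra.
have : 0 <= / PI * A - 1 by lra.
nra.
Qed.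

Theorem lemma4p6 (E : finType) (Q : mat E)
  (hN : (8 < #|E|)%N)
  (hstoch : stochastic_mx Q) (hirr : irreducible_mx Q)
  (hsym : symmetric_mx Q) (htr : mtr Q = 0)
  (eps : R) (heps : 0 < eps <= 1)
  (lam : R) (hlam : eps < lam) (hlamN : (lam - eps) * NR E > lam * eps)
  (u : R) (hu : 0 < u < 1) (m : nat) :
  exists l : R,
    infinite_sum
      (fun k : nat =>
         let n := (m * #|E| + 1 + k)%nat in
         (NR E / (NR E + lam)) ^ n *
         (/ NR E * S_beta u (L0n Q (n + 1) (@Jmx E))
          - / NR E * S_beta u (L0n Q n (@Jmx E)))) l /\
    Rabs (lam * NR E ^ 2 / (2 * u * (1 - u) * (NR E + lam)) * l)
    <= / (((1 + lam / NR E) * (1 - eps / NR E)) ^ (m * #|E| + 1))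
       * (C_eps eps * lam * (NR E - eps) / ((lam - eps) * NR E - lam * eps)).
Proof.
have hN8 := NR_gt8 hN.
have hN4 : 4 <= NR E by lra.
have hN0 : NR E <> 0 by lra.
pose d k := mtr (mmul (Cn Q k) Q).
have hd : forall k, 0 <= d k <= 1.
  by move=> k; have [_ h] := d_bounds Q hstoch hsym htr hN4 k.
pose c := 2 * u * (1 - u) / NR E ^ 2.
have hc : 0 <= c.
  apply: div_ge0; first by have := proj1 hu; have := proj2 hu; nra.
  apply: pow_lt; lra.
have hterm : forall n, / NR E * S_beta u (L0n Q (n + 1) (@Jmx E))
   - / NR E * S_beta u (L0n Q n (@Jmx E)) = c * d n.
  move=> n; rewrite addn1 /= !S_beta_eq msum_L0 // mtr_L0 // /c /d /Cn.
  field; auto.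
pose r := NR E / (NR E + lam).
have hr0 : 0 < r by apply: Rdiv_lt_0_compat; lra.
have hr1 : r < 1.
  rewrite /r; apply: (Rmult_lt_reg_r (NR E + lam)); first lra.
  rewrite /Rdiv Rmult_assoc Rinv_l; lra.
pose n0 := (m * #|E| + 1)%N.
pose t k := r ^ (n0 + k) * (c * d (n0 + k)%N).
have hF : (fun k : nat =>
         let n := (m * #|E| + 1 + k)%nat in
         (NR E / (NR E + lam)) ^ n *
         (/ NR E * S_beta u (L0n Q (n + 1) (@Jmx E))
          - / NR E * S_beta u (L0n Q n (@Jmx E)))) = t.
  apply: functional_extensionality => k /=; rewrite hterm //.
rewrite hF.
pose K := c * r ^ n0 / (1 - r).
have ht0 : forall k, 0 <= t k.
  move=> k; rewrite /t; apply: Rmult_le_pos; first by apply: pow_le; lra.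
  have := hd (n0 + k)%N; nra.
have htle : forall k, t k <= c * r ^ (n0 + k).
  move=> k; rewrite /t; have := hd (n0 + k)%N.
  have : 0 <= r ^ (n0 + k) by apply: pow_le; lra.
  move=> h1 [h2 h3]; have h4 := Rmult_le_pos _ _ hc h1; nra.
have hgrow : Un_growing (fun n => sum_f_R0 t n).
  move=> n /=; have := ht0 n.+1; lra.
have hbnd : forall n, sum_f_R0 t n <= K - c * r ^ (n0 + n.+1) / (1 - r).
  elim=> [|n IH] /=.
    have := htle 0%N; rewrite /K addn0 addn1 /=.
    have -> : c * r ^ n0 / (1 - r) - c * (r * r ^ n0) / (1 - r) = c * r ^ n0.
      field; lra.
    done.
  have := htle n.+1.
  have -> : (n0 + n.+2 = (n0 + n.+1).+1)%N by rewrite addnS.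
  rewrite /=.
  have -> : K - c * (r * r ^ (n0 + n.+1)) / (1 - r)
     = K - c * r ^ (n0 + n.+1) / (1 - r) + c * r ^ (n0 + n.+1).
    field; lra.
  lra.
have hK : forall n, sum_f_R0 t n <= K.
  move=> n; have := hbnd n.
  have : 0 <= c * r ^ (n0 + n.+1) / (1 - r).
    apply: div_ge0; last lra.
    apply: Rmult_le_pos => //; apply: pow_le; lra.
  lra.
have [l hl] := growing_cv (fun n => sum_f_R0 t n) hgrow
   (ex_intro _ K (fun x '(ex_intro i hi) => eq_ind_r (fun y => y <= K) (hK i) hi)).
exists l; split; first exact: hl.
have hl0 : 0 <= l.
  have := growing_ineq _ _ hgrow hl 0%N; have := ht0 0%N; rewrite /=; lra.
have hlK : l <= K.
  apply: (Rle_cv_lim (Vn := fun _ => K)) hK hl _.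
  move=> e he; exists 0%N => n _; rewrite /Rdist Rminus_diag Rabs_R0; lra.
have hlam0 : 0 < lam by lra.
have hpref : 0 <= lam * NR E ^ 2 / (2 * u * (1 - u) * (NR E + lam)).
  apply: div_ge0.
    apply: Rmult_le_pos; [lra | apply: pow_le; lra].
  have := proj1 hu; have := proj2 hu => h1 h2.
  have : 0 < 2 * u * (1 - u) by nra.
  move=> h; apply: Rmult_lt_0_compat => //; lra.
rewrite Rabs_pos_eq; last by apply: Rmult_le_pos.
apply: (Rle_trans _ (lam * NR E ^ 2 / (2 * u * (1 - u) * (NR E + lam)) * K)).
  by apply: Rmult_le_compat_l.
have -> : lam * NR E ^ 2 / (2 * u * (1 - u) * (NR E + lam)) * K = r ^ n0.
  rewrite /K /c /r.
  have -> : 1 - NR E / (NR E + lam) = lam / (NR E + lam) by field; lra.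
  have hu1 := proj1 hu; have hu2 := proj2 hu.
  field; repeat split; lra.
pose base := (1 + lam / NR E) * (1 - eps / NR E).
have hbase0 : 0 < base.
  rewrite /base; apply: Rmult_lt_0_compat.
    have : 0 < lam / NR E by apply: Rdiv_lt_0_compat; lra. lra.
  have : eps / NR E < 1.
    apply: (Rmult_lt_reg_r (NR E)); first lra.
    rewrite /Rdiv Rmult_assoc Rinv_l; lra.
  lra.
have hrb : r <= / base.
  have -> : r = / (1 + lam / NR E) by rewrite /r; field; lra.
  apply: Rinv_le_contravar => //.
  rewrite /base; have : 0 <= eps / NR E by apply: div_ge0; lra.
  have : 0 < 1 + lam / NR E.
    have : 0 < lam / NR E by apply: Rdiv_lt_0_compat; lra. lra.
  nra.
have hD : 0 < (lam - eps) * NR E - lam * eps by lra.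
have hK2 : 1 <= C_eps eps * lam * (NR E - eps) / ((lam - eps) * NR E - lam * eps).
  have hC := C_eps_ge1 eps heps.
  have -> : C_eps eps * lam * (NR E - eps) / ((lam - eps) * NR E - lam * eps)
     = C_eps eps * (lam * (NR E - eps) / ((lam - eps) * NR E - lam * eps)) by field; lra.
  have : 1 <= lam * (NR E - eps) / ((lam - eps) * NR E - lam * eps).
    apply: (Rmult_le_reg_r ((lam - eps) * NR E - lam * eps)) => //.
    rewrite /Rdiv Rmult_assoc Rinv_l; [nra | lra].
  nra.
rewrite -/base -pow_inv.
have h1 : r ^ n0 <= (/ base) ^ n0 by apply: pow_incr; lra.
have h2 : 0 <= (/ base) ^ n0 by apply: pow_le; left; apply: Rinv_0_lt_compat.
rewrite -/n0.
nra.
Qed.
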